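(* Let $\mathcal{G}$ be any grouped weight partition of $\mathbb{F}_q^k$ and $t$ a positive integer. Then $$r_{\mathcal{G}}(k,t)=N\big(\mathcal{D}_{\mathcal{G}}(t;u_0,u_1,\ldots,u_k)\big),\qquad u_i=(\underbrace{1,\ldots,1}_{i},0,\ldots,0),\ i=0,\ldots,k.$$
   Context: Let $W_i=\{u\in\mathbb{F}_q^k:\mathrm{wt}(u)=i\}$ (Hamming weight). A grouped weight partition is a partition $\mathcal{G}=\{G_1,\ldots,G_m\}$ of $\mathbb{F}_q^k$ with $G_j=\bigcup_{i\in S_j}W_i$, where $S_1,\ldots,S_m$ form a partition of $\{0,\ldots,k\}$. A $(\mathcal{P},t)$-encoding with redundancy $r$ is a systematic map $\mathcal{C}:\mathbb{F}_q^k\to\mathbb{F}_q^{k+r}$, $\mathcal{C}(u)=(u,p(u))$, with Hamming distance $d(\mathcal{C}(u),\mathcal{C}(v))\ge 2t+1$ whenever $u,v$ lie in different blocks; $r_{\mathcal{P}}(k,t)$ is the minimum such $r$. For distinct $u_1,\ldots,u_M$, $\mathcal{D}_{\mathcal{P}}(t;u_1,\ldots,u_M)$ is the $M\times M$ matrix with $(i,j)$ entry $\max(2t+1-d(u_i,u_j),0)$ if $u_i,u_j$ lie in different blocks of $\mathcal{P}$ and $0$ otherwise. For $D\in\mathbb{N}^{M\times M}$, $N(D)$ is the smallest $r\ge0$ such that there exist $z_1,\ldots,z_M\in\mathbb{F}_q^r$ with $d(z_i,z_j)\ge D_{i,j}$ for all $i\ne j$. *)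

(* Defs.v *)
From mathcomp Require Import all_boot all_order all_algebra all_field.
Set Implicit Arguments. Unset Strict Implicit. Unset Printing Implicit Defensive.
Import GRing.Theory.
Local Open Scope ring_scope.

Section Defs.
Variable F : finFieldType.

Definition hdist n (u v : 'rV[F]_n) : nat := #|[set j : 'I_n | u 0 j != v 0 j]|.
Definition hwt n (u : 'rV[F]_n) : nat := #|[set j : 'I_n | u 0 j != 0]|.

(* A partition P of F^k is represented by a block-label function blk:
   u, v lie in the same block iff blk u = blk v. *)

Definition has_encoding k (blk : 'rV[F]_k -> nat) (t r : nat) : Prop :=
  exists p : 'rV[F]_k -> 'rV[F]_r,
    forall u v, blk u != blk v ->
      (2 * t + 1 <= hdist (row_mx u (p u)) (row_mx v (p v)))%N.

Definition Dmat k (blk : 'rV[F]_k -> nat) (t M : nat) (us : 'I_M -> 'rV[F]_k)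
  : 'M[nat]_M :=
  \matrix_(i, j) (if blk (us i) != blk (us j)
                  then (2 * t + 1 - hdist (us i) (us j))%N else 0%N).

Definition realizable M (D : 'M[nat]_M) (r : nat) : Prop :=
  exists z : 'I_M -> 'rV[F]_r,
    forall i j, i != j -> (D i j <= hdist (z i) (z j))%N.

End Defs.

Definition is_min (P : nat -> Prop) (n : nat) : Prop :=
  P n /\ forall m, P m -> (n <= m)%N.

(* grouped weight partition: block of u determined by the weight of u via
   a labelling c of {0,...,k} (the fibres of c on {0..k} are the S_j) *)
Definition grouped (F : finFieldType) k (c : nat -> nat) : 'rV[F]_k -> nat :=
  fun u => c (hwt u).

Definition ustep (F : finFieldType) k (i : 'I_k.+1) : 'rV[F]_k :=
  \row_(j < k) (if (j < i)%N then 1 else 0).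

(* Main.v *)
Require Import Defs.
From mathcomp Require Import all_boot all_order all_algebra all_field zify.
Import GRing.Theory.


Lemma card_sum (T : finType) (P : pred T) : #|[set x | P x]| = (\sum_(x : T) (P x : nat))%N.
Proof.
rewrite -sum1_card big_mkcond /=; apply: eq_bigr => x _; rewrite inE; by case: (P x).
Qed.

Lemma hdist_sum (F : finFieldType) n (u v : 'rV[F]_n) :
  hdist u v = (\sum_(j < n) (u ord0 j != v ord0 j : nat))%N.
Proof. by rewrite /hdist card_sum. Qed.

Lemma hdist_row_mx (F : finFieldType) k r (u v : 'rV[F]_k) (p q : 'rV[F]_r) :
  hdist (row_mx u p) (row_mx v q) = (hdist u v + hdist p q)%N.
Proof.
rewrite !hdist_sum big_split_ord /=; congr (_ + _)%N; apply: eq_bigr => j _;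
by rewrite ?row_mxEl ?row_mxEr.
Qed.

Lemma card_range k a b : (a <= b <= k)%N ->
  (\sum_(j < k) ((a <= j) && (j < b) : nat))%N = (b - a)%N.
Proof.
case/andP => hab hbk.
rewrite -(big_mkord xpredT (fun j => ((a <= j) && (j < b) : nat))).
rewrite (@big_cat_nat _ _ _ a) ?(leq_trans hab) //=.
rewrite (@big_cat_nat _ _ _ b a) //=.
rewrite big_nat_cond big1 ?add0n; last first.
  by move=> i /andP[/andP[_ h] _]; rewrite leqNgt h.
rewrite addnC big_nat_cond big1 ?add0n; last first.
  by move=> i /andP[/andP[h _] _]; rewrite ltnNge h andbF.
rewrite (@eq_big_nat _ _ _ a b _ (fun _ => 1%N)) ?sum_nat_const_nat ?muln1 //.
by move=> i /andP[-> ->].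
Qed.

Lemma hwt_sum (F : finFieldType) n (u : 'rV[F]_n) :
  hwt u = (\sum_(j < n) (u ord0 j != 0%R : nat))%N.
Proof. by rewrite /hwt card_sum. Qed.

Lemma hdistC (F : finFieldType) n (u v : 'rV[F]_n) : hdist u v = hdist v u.
Proof. rewrite !hdist_sum; apply: eq_bigr => j _; by rewrite eq_sym. Qed.

Lemma hwt_tri (F : finFieldType) n (u v : 'rV[F]_n) : (hwt u <= hwt v + hdist u v)%N.
Proof.
rewrite !hwt_sum hdist_sum -big_split /=; apply: leq_sum => j _.
case: eqP => [->|]; case: eqP => [->|] //=; case: eqP => //.
Qed.

Lemma hwt_ustep (F : finFieldType) k (a : 'I_k.+1) : hwt (ustep F a) = a.
Proof.
rewrite hwt_sum -[X in _ = X]subn0 -(@card_range k 0 a); last by rewrite leq0n /= -ltnS ltn_ord.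
apply: eq_bigr => j _; rewrite mxE; case: ifP => _ /=; by rewrite ?oner_eq0 ?eqxx.
Qed.

Lemma hdist_ustep (F : finFieldType) k (a b : 'I_k.+1) :
  hdist (ustep F a) (ustep F b) = ((a - b) + (b - a))%N.
Proof.
wlog hab : a b / (a <= b)%N.
  move=> H; case: (leqP a b) => h; first exact: H.
  by rewrite hdistC H ?(ltnW h) // addnC.
rewrite (eqP hab) add0n -(@card_range k a b); last by rewrite hab -ltnS ltn_ord.
rewrite hdist_sum; apply: eq_bigr => j _; rewrite !mxE.
case: (ltnP j a) => hja; case: (ltnP j b) => hjb /=; rewrite ?eqxx ?oner_eq0 //.
- by have := leq_trans hja (leq_trans hab hjb); rewrite ltnn.
- by rewrite eq_sym oner_eq0.
Qed.

From Stdlib Require Import Classical.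

Lemma ex_min (P : nat -> Prop) n : P n -> exists m, is_min P m.
Proof.
elim: n {-2}n (leqnn n) => [|N IH] n hn Pn.
  exists n; split => // m _; by move: hn; rewrite leqn0 => /eqP ->.
case: (classic (exists m, (m < n)%N /\ P m)) => [[m [hm Pm]]|H].
  apply: (IH m) => //; by rewrite -ltnS (leq_trans hm hn).
exists n; split => // m Pm; rewrite leqNgt; apply/negP => hm; apply: H; by exists m.
Qed.

Lemma hdist_pos (F : finFieldType) n (u v : 'rV[F]_n) : u != v -> (0 < hdist u v)%N.
Proof.
move=> huv; case: (boolP [exists j, u ord0 j != v ord0 j]).
  case/existsP => j hj; rewrite hdist_sum (bigD1 j) //= hj; by [].
rewrite negb_exists => /forallP H; case/eqP: huv; apply/rowP => j.
by move: (H j); rewrite negbK => /eqP; rewrite [ord0]ord1.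
Qed.

Lemma rep_exists (F : finFieldType) k m : exists r (p : 'rV[F]_k -> 'rV[F]_r),
  forall u v, u != v -> (m <= hdist (p u) (p v))%N.
Proof.
elim: m => [|m [r [p Hp]]]; first by exists 0%N, (fun _ => 0%R).
exists (k + r)%N, (fun u => row_mx u (p u)) => u v huv.
rewrite hdist_row_mx -add1n; apply: leq_add; [exact: hdist_pos | exact: Hp].
Qed.

Lemma hwt_le (F : finFieldType) k (u : 'rV[F]_k) : (hwt u <= k)%N.
Proof. by rewrite /hwt -[X in (_ <= X)%N]card_ord max_card. Qed.

Lemma enc_real (F : finFieldType) k c t r :
  has_encoding (@grouped F k c) t r <->
  realizable F (Dmat (@grouped F k c) t (@ustep F k)) r.
Proof.
split.
  case=> p Hp; exists (fun i => p (ustep F i)) => i j _; rewrite mxE.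
  case: ifP => // /Hp; rewrite hdist_row_mx => h; by rewrite leq_subLR.
case=> z Hz; exists (fun u => z (inord (hwt u))) => u v huv.
have hu : hwt (ustep F (inord (hwt u) : 'I_k.+1)) = hwt u.
  by rewrite hwt_ustep inordK // ltnS hwt_le.
have hv : hwt (ustep F (inord (hwt v) : 'I_k.+1)) = hwt v.
  by rewrite hwt_ustep inordK // ltnS hwt_le.
have hne : (inord (hwt u) : 'I_k.+1) != inord (hwt v).
  apply: contra huv => /eqP e; by rewrite /grouped -hu -hv e.
have := Hz _ _ hne; rewrite mxE /grouped hu hv.
move: huv; rewrite /grouped => -> /=.
rewrite hdist_ustep !inordK ?ltnS ?hwt_le // hdist_row_mx.
have t1 := @hwt_tri _ _ u v; have t2 := @hwt_tri _ _ v u; rewrite hdistC in t2.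
move=> h. rewrite leq_subLR in h. lia.
Qed.

Theorem corollary9 (F : finFieldType) (k : nat) (c : nat -> nat) (t : nat)
  (ht : (0 < t)%N) :
  let G := @grouped F k c in
  (exists r, is_min (has_encoding G t) r) /\
  (forall r, is_min (has_encoding G t) r <->
             is_min (realizable F (Dmat G t (@ustep F k))) r).
Proof.
move=> G; split.
  have [r [p Hp]] := @rep_exists F k (2 * t + 1)%N.
  apply: (@ex_min _ r); exists p => u v huv.
  have huv' : u != v by apply: contra huv => /eqP ->.
  rewrite hdist_row_mx; apply: leq_trans (Hp _ _ huv') (leq_addl _ _).
move=> r; rewrite /is_min; split; case=> h1 h2; split.
- by apply/enc_real.
- by move=> m /enc_real; apply: h2.
- by apply/enc_real.
- by move=> m /enc_real; apply: h2.
Qed.
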